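(* Let $v_1,\ldots,v_n$ be a matching ordering of a tournament $G$. If $v$ is a vertex of $G$ with indegree $b$, then $v$ is one of $v_b$, $v_{b+1}$, $v_{b+2}$. Moreover, $v=v_b$ if and only if $v$ is the head of a backedge, $v=v_{b+2}$ if and only if $v$ is the tail of a backedge, and $v=v_{b+1}$ if and only if $v$ is not an end of any backedge.
   Context: A tournament is a finite, non-null, loopless directed graph in which for any two distinct vertices $u,v$ there is exactly one edge with both ends in $\{u,v\}$. The indegree of $v$ is the number of vertices $u$ with an edge from $u$ to $v$. Given an ordering $v_1,\dots,v_n$ of the vertices, a backedge is an edge from $v_j$ to $v_i$ with $j>i$ (tail $v_j$, head $v_i$); the ordering is a matching ordering if every vertex is the head or tail of at most one backedge. *)

(* Defs.v *)
From mathcomp Require Import all_boot.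
Set Implicit Arguments. Unset Strict Implicit. Unset Printing Implicit Defensive.

(* A directed graph on a finite vertex type V is given by its edge relation:
   e u v means there is an edge from u to v. *)

Definition tournament (V : finType) (e : rel V) : Prop :=
  0 < #|V| /\ (forall v, ~~ e v v) /\ (forall u v, u != v -> e u v != e v u).

Definition indegree (V : finType) (e : rel V) (v : V) : nat :=
  #|[set u | e u v]|.

(* Ordering v_1,...,v_n represented by vs : 'I_n -> V (bijective),
   with v_(i+1) = vs i (0-based index i).
   backedge vs e i j : there is a backedge with head vs i and tail vs j,
   i.e. i < j and an edge from vs j to vs i. *)
Definition backedge (V : finType) (e : rel V) (n : nat) (vs : 'I_n -> V)
  (i j : 'I_n) : bool := (i < j) && e (vs j) (vs i).

Definition matching_ordering (V : finType) (e : rel V) (n : nat)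
  (vs : 'I_n -> V) : Prop :=
  forall i : 'I_n,
    #|[set j : 'I_n | backedge e vs i j || backedge e vs j i]| <= 1.

(* Main.v *)
Require Import Defs.
From mathcomp Require Import all_boot.
From mathcomp Require Import zify.

Lemma card_sum (T : finType) (P : pred T) :
  #|[set x | P x]| = \sum_x (P x : nat).
Proof.
rewrite -sum1_card big_mkcond /=; apply: eq_bigr => x _.
by rewrite inE; case: (P x).
Qed.

Lemma ex_card (T : finType) (P : pred T) :
  [exists x, P x] = (0 < #|[set x | P x]|).
Proof.
apply/existsP/card_gt0P => [[x Px]|[x Px]]; exists x; by rewrite ?inE in Px *.
Qed.

Lemma sum_lt n k : k <= n -> \sum_(j < n) ((j < k) : nat) = k.
Proof.
elim: n => [|n IH] hk; first by rewrite big_ord0; lia.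
rewrite big_ord_recr /=.
case: (ltnP n k) => h.
- have ek : k = n.+1 by lia. subst k.
  rewrite (eq_bigr (fun _ => 1)) => [|j _]; last by rewrite (ltn_trans (ltn_ord j)).
  by rewrite sum1_card card_ord addn1.
- by rewrite IH ?addn0.
Qed.

(* Vertex v = vs k is v_(k+1) in the paper's 1-based numbering. *)
Theorem proposition5p1 (V : finType) (e : rel V) (n : nat) (vs : 'I_n -> V)
  (hT : tournament e) (hbij : bijective vs) (hM : matching_ordering e vs)
  (v : V) (k : 'I_n) (hk : vs k = v) :
  let b := indegree e v in
  [/\ k.+1 \in [:: b; b.+1; b.+2],
      (k.+1 == b) = [exists j : 'I_n, backedge e vs k j],
      (k.+1 == b.+2) = [exists j : 'I_n, backedge e vs j k]
    & (k.+1 == b.+1) = ~~ [exists j : 'I_n, backedge e vs k j || backedge e vs j k]].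
Proof.
case: hT => _ [hloop htour].
have inj := bij_inj hbij.
subst v.
have hb : indegree e (vs k) = #|[set j | e (vs j) (vs k)]|.
  rewrite /indegree -(card_imset _ inj).
  suff -> : [set u | e u (vs k)] = vs @: [set j | e (vs j) (vs k)] by [].
  apply/setP => u; rewrite inE.
  case: hbij => g _ gK.
  apply/idP/imsetP => [h|[j]]; last by rewrite inE => ? ->.
  by exists (g u); rewrite ?inE gK.
set h := #|[set j | backedge e vs k j]|.
set t := #|[set j | backedge e vs j k]|.
have key : indegree e (vs k) + t = k + h.
  rewrite hb /t /h !card_sum -!big_split /= -(@sum_lt n k (ltnW (ltn_ord k))) -big_split /=.
  apply: eq_bigr => j _; rewrite /backedge.
  case: (ltngtP j k) => hjk /=.
  - have hne : vs j != vs k by apply/eqP => /inj E; move: hjk; rewrite E ltnn.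
    have := htour _ _ hne.
    by case: (e (vs j) (vs k)); case: (e (vs k) (vs j)).
  - by rewrite !addn0.
  - have -> : j = k by apply: val_inj.
    by rewrite (negbTE (hloop _)).
have pw : forall j, ((backedge e vs k j || backedge e vs j k) : nat) = (backedge e vs k j : nat) + backedge e vs j k.
  move=> j; rewrite /backedge.
  case: (ltngtP k j) => /= hj; rewrite ?andbF ?addn0 ?orbF //.
have hm : h + t <= 1.
  have := hM k; rewrite /h /t !card_sum -big_split /= (eq_bigr _ (fun j _ => pw j)).
  by [].
have hor : [exists j, backedge e vs k j || backedge e vs j k] = (0 < h + t).
  rewrite ex_card /h /t !card_sum -big_split /=.
  by rewrite (eq_bigr _ (fun j _ => pw j)).
rewrite hor !ex_card -/h -/t /=.
move: key hm; set B := indegree e (vs k) => key hm.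
clear hor hb pw; clearbody h t B.
rewrite !inE.
case: h t key hm => [|[|h]] [|[|t]] //= key hm; try lia.
- have -> : B = k by lia. by rewrite eqxx !orbT /=; split; try by []; apply/negbTE; lia.
- have -> : B = k.+1 - 2 by lia. case: k key => [[|kk] ?] /= key; first lia.
  rewrite !subSS ?subn0 eqxx !orbT; split; try by []; apply/negbTE; lia.
- have -> : B = k.+1 by lia. by rewrite eqxx /=; split; try by []; apply/negbTE; lia.
Qed.
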